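(* Let $G$ be a torsion-free group acting $\kappa$-acylindrically on a simplicial tree $T$. Let $g,h\in G$ be loxodromic with axes $\alpha_g,\alpha_h$ and translation lengths $\lambda_T(g),\lambda_T(h)$. If $g$ and $h$ do not have a common nontrivial power, then $\mathrm{diam}_T(\alpha_g\cap\alpha_h)\le\kappa+\lambda_T(g)\cdot\lambda_T(h)$.
   Context: An action on a simplicial tree is $\kappa$-acylindrical if the pointwise stabiliser of every edge path of length at least $\kappa+1$ is trivial. For a loxodromic element $g$, its axis $\alpha_g$ is the unique $g$-invariant bi-infinite geodesic on which $g$ translates, and $\lambda_T(g)>0$ is its translation length. Common nontrivial power: $g^m=h^n\neq1$ for some integers $m,n$. *)

(* Defs.v *)
From mathcomp Require Import all_boot all_order all_algebra.
Set Implicit Arguments. Unset Strict Implicit. Unset Printing Implicit Defensive.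
Import GRing.Theory Num.Theory.

Definition is_group (G : Type) (mul : G -> G -> G) (inv : G -> G) (one : G) : Prop :=
  [/\ (forall a b c, mul a (mul b c) = mul (mul a b) c),
      (forall a, mul one a = a), (forall a, mul a one = a),
      (forall a, mul (inv a) a = one) & (forall a, mul a (inv a) = one)].

Section GroupDefs.
Variables (G : Type) (mul : G -> G -> G) (inv : G -> G) (one : G).

Fixpoint gpow (g : G) (n : nat) : G :=
  match n with O => one | S n' => mul g (gpow g n') end.

Definition zpow (g : G) (z : int) : G :=
  match z with Posz n => gpow g n | Negz n => inv (gpow g n.+1) end.

Definition torsion_free : Prop :=
  forall (g : G) (n : nat), (0 < n)%N -> gpow g n = one -> g = one.

Definition common_nontrivial_power (g h : G) : Prop :=
  exists m n : int, zpow g m = zpow h n /\ zpow g m <> one.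
End GroupDefs.

Section Graphs.
Variables (V : Type) (adj : V -> V -> Prop).

(* x :: s is a walk (edge path) starting at x; its length is size s *)
Fixpoint is_walk (x : V) (s : seq V) : Prop :=
  match s with [::] => True | y :: s' => adj x y /\ is_walk y s' end.

Definition reduced (x : V) (s : seq V) : Prop :=
  forall i, (i.+2 <= size s)%N -> nth x (x :: s) i <> nth x (x :: s) i.+2.

Definition is_tree : Prop :=
  [/\ (forall x, ~ adj x x),
      (forall x y, adj x y -> adj y x),
      (forall x y, exists s, is_walk x s /\ last x s = y) &
      (forall x s, is_walk x s -> reduced x s -> last x s = x -> s = [::])].

Definition is_dist (x y : V) (n : nat) : Prop :=
  (exists s, [/\ is_walk x s, last x s = y & size s = n]) /\
  (forall s, is_walk x s -> last x s = y -> (n <= size s)%N).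

Definition biinf_geodesic (gam : int -> V) : Prop :=
  forall i j : int, is_dist (gam i) (gam j) `|(i - j)%R|%N.
End Graphs.

Section Actions.
Variables (G : Type) (mul : G -> G -> G) (one : G) (V : Type) (adj : V -> V -> Prop)
          (act : G -> V -> V).

Definition is_action : Prop :=
  [/\ (forall x, act one x = x),
      (forall g h x, act (mul g h) x = act g (act h x)) &
      (forall g x y, adj x y <-> adj (act g x) (act g y))].

Definition acylindrical (kappa : nat) : Prop :=
  forall (x : V) (s : seq V), is_walk adj x s -> reduced x s -> (kappa.+1 <= size s)%N ->
  forall g : G, (forall i, (i <= size s)%N -> act g (nth x (x :: s) i) = nth x (x :: s) i) ->
  g = one.

Definition translation_length (g : G) (l : nat) : Prop :=
  (exists x, is_dist adj x (act g x) l) /\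
  (forall x n, is_dist adj x (act g x) n -> (l <= n)%N).

Definition is_axis (g : G) (gam : int -> V) : Prop :=
  biinf_geodesic adj gam /\
  exists k : int, (k != 0)%R /\ forall i : int, act g (gam i) = gam (i + k)%R.

Definition loxodromic (g : G) : Prop := exists gam, is_axis g gam.
End Actions.

(* Main.v *)
Require Import Defs.
From mathcomp Require Import all_boot all_order all_algebra.
From mathcomp Require Import zify ring.
From Stdlib Require Import Classical.
Import GRing.Theory Num.Theory.
Set Implicit Arguments. Unset Strict Implicit. Unset Printing Implicit Defensive.

Section Graph.
Variables (V : Type) (adj : V -> V -> Prop).

Definition Wk x y N := exists s, [/\ is_walk adj x s, last x s = y & size s = N].

Lemma walk_cat x s t : is_walk adj x (s ++ t) <-> is_walk adj x s /\ is_walk adj (last x s) t.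
Proof. elim: s x => [|y s IH] x /=; first by tauto. rewrite IH; tauto. Qed.

Lemma Wk_cat x y z a b : Wk x y a -> Wk y z b -> Wk x z (a + b).
Proof.
move=> [s [ws ls ss]] [t [wt lt st]]; exists (s ++ t); split.
- by apply/walk_cat; rewrite ls.
- by rewrite last_cat ls.
- by rewrite size_cat ss st.
Qed.

Lemma dist_Wk x y n : is_dist adj x y n -> Wk x y n.
Proof. by case=> [[s [? ? ?]] _]; exists s. Qed.

Lemma Wk_le x y n N : is_dist adj x y n -> Wk x y N -> (n <= N)%N.
Proof. by move=> [_ H] [s [w l <-]]; apply: H. Qed.

Lemma dist_uniq x y n m : is_dist adj x y n -> is_dist adj x y m -> n = m.
Proof.
move=> H1 H2; apply/eqP.
by rewrite eqn_leq (Wk_le H1 (dist_Wk H2)) (Wk_le H2 (dist_Wk H1)).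
Qed.

Lemma dist_xx x n : is_dist adj x x n -> n = 0%N.
Proof.
move=> H; have: (n <= 0)%N by apply: (Wk_le H); exists [::].
by case: n {H}.
Qed.

Lemma dist1_adj x y : is_dist adj x y 1 -> adj x y.
Proof.
move=> /dist_Wk [[|z [|? ?]] [w l s]] //=.
by case: w => w _; rewrite /= in l; rewrite -l.
Qed.

Lemma walk_fun (c : nat -> V) a m :
  (forall t, (a <= t)%N -> (t < a + m)%N -> adj (c t) (c t.+1)) ->
  is_walk adj (c a) (map c (iota a.+1 m)).
Proof.
elim: m a => [|m IH] a H //=; split.
- apply: H; lia.
- apply: IH => t h1 h2; apply: H; lia.
Qed.

Lemma last_fun (c : nat -> V) a m : last (c a) (map c (iota a.+1 m)) = c (a + m)%N.
Proof. elim: m a => [|m IH] a /=; first by rewrite addn0. rewrite IH; congr c; lia. Qed.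

Lemma nth_fun (c : nat -> V) m i : (i <= m)%N ->
  nth (c 0%N) (c 0%N :: map c (iota 1 m)) i = c i.
Proof.
move=> im; have -> : c 0%N :: map c (iota 1 m) = map c (iota 0 m.+1) by [].
by rewrite (nth_map 0%N) ?size_iota // nth_iota.
Qed.

Definition geo (f : nat -> V) n :=
  forall a b, (a <= b)%N -> (b <= n)%N -> is_dist adj (f a) (f b) (b - a).

Lemma geo_adj f n t : geo f n -> (t < n)%N -> adj (f t) (f t.+1).
Proof. move=> H h; apply: dist1_adj; rewrite -(subSnn t); apply: H => //. Qed.

Lemma geo_neq f n t : geo f n -> (t.+2 <= n)%N -> f t <> f t.+2.
Proof.
move=> H h E; have := H t t.+2 (leq_trans (leqnSn _) (leqnSn _)) h.
by rewrite E => /dist_xx; lia.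
Qed.

Lemma geo_shift f n : geo f n.+1 -> geo (fun t => f t.+1) n.
Proof. move=> H a b h1 h2; rewrite -subSS; apply: H => //. Qed.

Lemma geo_restr f n m : geo f n -> (m <= n)%N -> geo f m.
Proof. move=> H mn a b h1 h2; apply: H => //; exact: leq_trans h2 mn. Qed.

Lemma geo_uniq (HT : is_tree adj) n : forall f f', geo f n -> geo f' n ->
  f 0%N = f' 0%N -> f n = f' n -> forall t, (t <= n)%N -> f t = f' t.
Proof.
elim/ltn_ind: n => n IH f f' gf gf' e0 en t tn.
case: n IH gf gf' en tn => [|[|m]] IH gf gf' en tn.
- by have -> : t = 0%N by lia.
- by case: t tn => [|[|?]] //.
case: (classic (f 1%N = f' 1%N)) => e1.
  case: t tn => [|t] tn //.
  apply: (IH m.+1 _ (fun t => f t.+1) (fun t => f' t.+1)) => //; exact: geo_shift.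
case: (classic (f m.+1 = f' m.+1)) => em.
  case: e1; apply: (IH m.+1 _ f f') => //; [exact: (geo_restr gf (leqnSn _)) | exact: (geo_restr gf' (leqnSn _))].
exfalso.
pose c t := if (t < m.+2)%N then f t else f' (m.+2 + m.+2 - t)%N.
case: HT => _ Hsym _ Hcyc.
have W : is_walk adj (c 0%N) (map c (iota 1 (m.+2 + m.+2))).
  apply: walk_fun => tt _ h; rewrite /c.
  case: (ltnP tt m.+2) => h1; case: (ltnP tt.+1 m.+2) => h2.
  - exact: geo_adj gf h1.
  - have ett : tt = m.+1 by lia.
    rewrite ett (_ : (m.+2 + m.+2 - m.+2 = m.+2)%N); last by lia.
    by rewrite -en; apply: (geo_adj gf).
  - lia.
  - apply: Hsym.
    rewrite (_ : (m.+2 + m.+2 - tt = (m.+2 + m.+2 - tt.+1).+1)%N); last by lia.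
    apply: (geo_adj gf'); lia.
have R : reduced (c 0%N) (map c (iota 1 (m.+2 + m.+2))).
  move=> i; rewrite size_map size_iota => hi.
  rewrite !nth_fun; try lia.
  rewrite /c; case: (ltnP i m.+2) => h1; case: (ltnP i.+2 m.+2) => h2.
  - by apply: (geo_neq gf); lia.
  - have [->|->] : i = m \/ i = m.+1 by lia.
    + rewrite (_ : (m.+2 + m.+2 - m.+2 = m.+2)%N); last by lia.
      by rewrite -en; apply: (geo_neq gf).
    + rewrite (_ : (m.+2 + m.+2 - m.+3 = m.+1)%N); last by lia.
      exact: em.
  - lia.
  - rewrite (_ : (m.+2 + m.+2 - i = (m.+2 + m.+2 - i.+2).+2)%N); last by lia.
    move=> E; apply: (geo_neq gf' (t := (m.+2 + m.+2 - i.+2)%N)); [lia | by rewrite E].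
have L : last (c 0%N) (map c (iota 1 (m.+2 + m.+2))) = c 0%N.
  rewrite last_fun /c add0n ltnNge leq_addr /= subnn.
  by rewrite -e0.
by have := Hcyc _ _ W R L.
Qed.

End Graph.

Section Grp.
Variables (G : Type) (mul : G -> G -> G) (inv : G -> G) (one : G).
Hypothesis (HG : is_group mul inv one).
Variables (V : Type) (adj : V -> V -> Prop) (act : G -> V -> V).
Hypothesis (Hact : is_action mul one adj act).

Lemma act_invK a x : act (inv a) (act a x) = x.
Proof. case: HG => _ _ _ Hl _; case: Hact => H1 HM _. by rewrite -HM Hl H1. Qed.

Lemma Wk_map u x y N : Wk adj x y N -> Wk adj (act u x) (act u y) N.
Proof.
case: Hact => _ _ Hadj.
move=> [s [w l e]]; exists (map (act u) s); split.
- elim: s x w {l e} => [|z s IH] x //= [a w]; split; [exact: (proj1 (Hadj u x z) a) | exact: IH].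
- by rewrite last_map l.
- by rewrite size_map.
Qed.

Lemma act_gpow g (ag : int -> V) k : (forall i, act g (ag i) = ag (i + k)%R) ->
  forall m i, act (gpow mul one g m) (ag i) = ag (i + m%:Z * k)%R.
Proof.
case: Hact => H1 HM _ Hg; elim=> [|m IH] i /=.
  by rewrite H1 mul0r addr0.
by rewrite HM IH Hg intS; congr ag; ring.
Qed.

Lemma act_zpow g ag k : (forall i, act g (ag i) = ag (i + k)%R) ->
  forall z i, act (zpow mul inv one g z) (ag i) = ag (i + z * k)%R.
Proof.
move=> Hg [m|m] i /=; first exact: act_gpow.
have -> : ag i = act (gpow mul one g m.+1) (ag (i + Negz m * k)%R).
  by rewrite (act_gpow Hg) NegzE; congr ag; ring.
by rewrite act_invK.
Qed.

Lemma trans_bound (HT : is_tree adj) g ag k l :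
  biinf_geodesic adj ag -> (forall i, act g (ag i) = ag (i + k)%R) ->
  translation_length adj act g l -> (`|k| <= l)%N.
Proof.
move=> Hgeo Hg [[x0 Hx0] _].
case: HT => _ _ Hconn _.
have [p [wp lp]] := Hconn (ag 0%R) x0. have [q [wq lq]] := Hconn x0 (ag 0%R).
have Wp : Wk adj (ag 0%R) x0 (size p) by exists p.
have Wq : Wk adj x0 (ag 0%R) (size q) by exists q.
have Wm : forall m, Wk adj x0 (act (gpow mul one g m) x0) (m * l).
  elim=> [|m IH] /=.
    by exists [::]; split => //; case: Hact => ->.
  have := Wk_map g IH. case: Hact => _ HM _. rewrite -HM => W2.
  rewrite mulSn. exact: Wk_cat (dist_Wk Hx0) W2.
pose m := (size p + size q).+1.
have W := Wk_cat (Wk_cat Wp (Wm m)) (Wk_map (gpow mul one g m) Wq).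
rewrite (act_gpow Hg) add0r in W.
have := Wk_le (Hgeo 0%R (m%:Z * k)%R) W.
rewrite sub0r abszN abszM absz_nat /m => h.
nia.
Qed.

End Grp.

Theorem lemma2p6
  (G : Type) (mul : G -> G -> G) (inv : G -> G) (one : G)
  (HG : is_group mul inv one) (Htf : torsion_free mul one)
  (V : Type) (adj : V -> V -> Prop) (HT : is_tree adj)
  (act : G -> V -> V) (Hact : is_action mul one adj act)
  (kappa : nat) (Hacyl : acylindrical one adj act kappa)
  (g h : G) (ag ah : int -> V)
  (Hag : is_axis adj act g ag) (Hah : is_axis adj act h ah)
  (lg lh : nat)
  (Hlg : translation_length adj act g lg) (Hlh : translation_length adj act h lh)
  (Hnp : ~ common_nontrivial_power mul inv one g h) :
  forall (i j i' j' : int) (n : nat),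
    ag i = ah i' -> ag j = ah j' ->
    is_dist adj (ag i) (ag j) n ->
    (n <= kappa + lg * lh)%N.
Proof.
move=> i j i' j' n e1 e2 Hd.
have Hact' := Hact; case: Hact' => H1 HM Hadj.
case: Hag => geog [k [k0 Hgk]]; case: Hah => geoh [k' [k'0 Hhk]].
have lgk := trans_bound Hact HT geog Hgk Hlg.
have lhk := trans_bound Hact HT geoh Hhk Hlh.
have en : n = `|(i - j)%R|%N := dist_uniq Hd (geog i j).
have en' : n = `|(i' - j')%R|%N by apply: dist_uniq (geoh i' j'); rewrite -e1 -e2.
rewrite leqNgt; apply/negP => Hlt.
pose e : int := if (i <= j)%R then 1%R else (-1)%R.
pose e' : int := if (i' <= j')%R then 1%R else (-1)%R.
have ee : (e = 1 \/ e = -1)%R by rewrite /e; case: ifP; auto.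
have ee' : (e' = 1 \/ e' = -1)%R by rewrite /e'; case: ifP; auto.
have ej : j = (i + e * n%:Z)%R by rewrite /e en; case: ifP => hh; lia.
have ej' : j' = (i' + e' * n%:Z)%R by rewrite /e' en'; case: ifP => hh; lia.
pose f t := ag (i + e * t%:Z)%R.
pose f' t := ah (i' + e' * t%:Z)%R.
have geof : geo adj f n.
  move=> a b ab bn; rewrite /f.
  have := geog (i + e * a%:Z)%R (i + e * b%:Z)%R.
  suff -> : `|((i + e * a%:Z) - (i + e * b%:Z))%R|%N = (b - a)%N by [].
  by case: ee => ->; lia.
have geof' : geo adj f' n.
  move=> a b ab bn; rewrite /f'.
  have := geoh (i' + e' * a%:Z)%R (i' + e' * b%:Z)%R.
  suff -> : `|((i' + e' * a%:Z) - (i' + e' * b%:Z))%R|%N = (b - a)%N by [].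
  by case: ee' => ->; lia.
have ff' : forall t, (t <= n)%N -> f t = f' t.
  apply: (geo_uniq HT geof geof').
    by rewrite /f /f' !mulr0 !addr0.
  by rewrite /f /f' -ej -ej'.
pose L := (`|k| * `|k'|)%N.
have Lle : (L <= lg * lh)%N by apply: leq_mul.
have L0 : (0 < L)%N by rewrite /L; lia.
pose sk : int := if (0 <= k)%R then 1%R else (-1)%R.
pose sk' : int := if (0 <= k')%R then 1%R else (-1)%R.
have hsk : (sk * k = `|k|%N%:Z)%R by rewrite /sk; case: ifP => hh; lia.
have hsk' : (sk' * k' = `|k'|%N%:Z)%R by rewrite /sk'; case: ifP => hh; lia.
pose z := (e * sk * `|k'|%N%:Z)%R.
pose w := (e' * sk' * `|k|%N%:Z)%R.
have hz : (z * k = e * L%:Z)%R.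
  rewrite /z (_ : (e * sk * `|k'|%N%:Z * k = e * (sk * k) * `|k'|%N%:Z)%R); last by ring.
  by rewrite hsk /L PoszM mulrA.
have hw : (w * k' = e' * L%:Z)%R.
  rewrite /w (_ : (e' * sk' * `|k|%N%:Z * k' = e' * (sk' * k') * `|k|%N%:Z)%R); last by ring.
  by rewrite hsk' /L PoszM; ring.
pose A := zpow mul inv one g z.
pose B := zpow mul inv one h w.
have hA : forall t, act A (f t) = f (t + L)%N.
  by move=> t; rewrite /A /f (act_zpow HG Hact Hgk) hz; f_equal; rewrite PoszD; ring.
have hB : forall t, act B (f' t) = f' (t + L)%N.
  by move=> t; rewrite /B /f' (act_zpow HG Hact Hhk) hw; f_equal; rewrite PoszD; ring.
pose C := mul (inv B) A.
have hC : forall t, (t <= n - L)%N -> act C (f t) = f t.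
  move=> t ht; rewrite /C HM hA ff'; last by lia.
  by rewrite -hB (act_invK HG Hact) ff' //; lia.
have C1 : C = one.
  apply: (Hacyl (f 0%N) (map f (iota 1 (n - L)))).
  - apply: walk_fun => t _ ht; apply: (geo_adj geof); lia.
  - move=> t; rewrite size_map size_iota => ht.
    rewrite !nth_fun; try lia.
    apply: (geo_neq geof); lia.
  - rewrite size_map size_iota; lia.
  - move=> t; rewrite size_map size_iota => ht.
    by rewrite nth_fun // hC.
have AB : A = B.
  case: HG => Ha H1l H1r Hl Hr.
  by rewrite -[A]H1l -(Hr B) -Ha -/C C1 H1r.
apply: Hnp; exists z, w; split; first exact: AB.
move=> A1; have := hA 0%N; rewrite /A A1 H1 add0n => E.
have := geof 0%N L (leq0n _) ltac:(lia).
rewrite -E subn0 => D; have := dist_xx D; lia.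
Qed.
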